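(* Let $\mathbf{P}=(X,P)$ be a finite interval order with no duplicated holdings, and let $\mathbf{I}$ be a distinguishing interval representation of $\mathbf{P}$, assigning to each $x\in X$ the interval $[l_x,r_x]$. Then for every linear extension $L$ of $P$ there exists a choice function $f$ on $\mathbf{I}$ such that $L(f)=L$.
   Context: An interval representation of a poset $(X,P)$ assigns to each $x\in X$ a closed real interval $[l_x,r_x]$ (lengths may be $0$) such that $x<y$ in $P$ iff $r_x<l_y$; $(X,P)$ is an interval order if it has one. $\mathbf{P}$ has no duplicated holdings if no two distinct elements can be assigned the same interval. A representation is distinguishing if no two intervals share an endpoint (every real number occurs at most once as an endpoint). A linear extension of $P$ is a linear order $L$ on $X$ with $P\subseteq L$. A choice function on the representation $\mathbf{I}$ is an injection $f:X\to\mathbb{R}$ with $l_x\le f(x)\le r_x$ for all $x$; $L(f)$ is the linear order on $X$ with $x<y$ in $L(f)$ iff $f(x)<f(y)$. *)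

(* Defs.v *)
From mathcomp Require Import all_boot.
From Stdlib Require Import Reals.
Open Scope R_scope.

Definition strict_poset {X : Type} (P : X -> X -> Prop) : Prop :=
  (forall x, ~ P x x) /\ (forall x y z, P x y -> P y z -> P x z).

Definition interval_rep {X : Type} (P : X -> X -> Prop) (l r : X -> R) : Prop :=
  (forall x, l x <= r x) /\ (forall x y, P x y <-> r x < l y).

Definition is_interval_order {X : Type} (P : X -> X -> Prop) : Prop :=
  strict_poset P /\ exists l r : X -> R, interval_rep P l r.

Definition no_dup_holdings {X : Type} (P : X -> X -> Prop) : Prop :=
  forall x y, x <> y ->
    ~ ((forall z, P z x <-> P z y) /\ (forall z, P x z <-> P y z)).

Definition distinguishing {X : Type} (l r : X -> R) : Prop :=
  (forall x y, x <> y -> l x <> l y) /\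
  (forall x y, x <> y -> r x <> r y) /\
  (forall x y, l x <> r y).

Definition linear_extension {X : Type} (P L : X -> X -> Prop) : Prop :=
  strict_poset L /\
  (forall x y, x <> y -> L x y \/ L y x) /\
  (forall x y, P x y -> L x y).

Definition choice_function {X : Type} (l r f : X -> R) : Prop :=
  (forall x y, f x = f y -> x = y) /\ (forall x, l x <= f x <= r x).

Definition induced_order_eq {X : Type} (f : X -> R) (L : X -> X -> Prop) : Prop :=
  forall x y, L x y <-> f x < f y.

(* Main.v *)
Require Import Defs.
From mathcomp Require Import all_boot.
From Stdlib Require Import Reals.
From Stdlib Require Import Lra ClassicalEpsilon.

Definition dec (p : Prop) : bool := if excluded_middle_informative p then true else false.
Lemma decP p : dec p = true <-> p.
Proof. rewrite /dec; case: excluded_middle_informative => //= H; split => //. Qed.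

Definition fmax {T : Type} (g : T -> R) (a : R) (s : seq T) :=
  foldr (fun y acc => Rmax (g y) acc) a s.
Definition fmin {T : Type} (g : T -> R) (a : R) (s : seq T) :=
  foldr (fun y acc => Rmin (g y) acc) a s.

Lemma fmax_ge_a {T : Type} g a (s : seq T) : (a <= fmax g a s)%R.
Proof. elim: s => [|y s IH] /=; [apply Rle_refl|]. exact: Rle_trans IH (Rmax_r _ _). Qed.

Lemma fmax_ge {T : eqType} g a (s : seq T) y : y \in s -> (g y <= fmax g a s)%R.
Proof.
elim: s => [|z s IH] //=. rewrite in_cons => /orP [/eqP -> | H].
- apply Rmax_l.
- exact: Rle_trans (IH H) (Rmax_r _ _).
Qed.

Lemma fmax_le {T : eqType} g a (s : seq T) B : (a <= B)%R -> (forall y, y \in s -> g y <= B)%R -> (fmax g a s <= B)%R.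
Proof.
move=> Ha; elim: s => [|z s IH] //= H. apply Rmax_lub.
- apply H; by rewrite in_cons eqxx.
- apply IH => y Hy; apply H; by rewrite in_cons Hy orbT.
Qed.

Lemma fmax_lt {T : eqType} g a (s : seq T) B : (a < B)%R -> (forall y, y \in s -> g y < B)%R -> (fmax g a s < B)%R.
Proof.
move=> Ha; elim: s => [|z s IH] //= H. apply Rmax_lub_lt.
- apply H; by rewrite in_cons eqxx.
- apply IH => y Hy; apply H; by rewrite in_cons Hy orbT.
Qed.

Lemma fmin_pos {T : eqType} g (s : seq T) : (forall y, y \in s -> 0 < g y)%R -> (0 < fmin g 1 s)%R.
Proof.
elim: s => [|z s IH] /= H; [lra|]. apply Rmin_glb_lt.
- apply H; by rewrite in_cons eqxx.
- apply IH => y Hy; apply H; by rewrite in_cons Hy orbT.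
Qed.

Lemma fmin_le {T : eqType} g (s : seq T) y : y \in s -> (fmin g 1 s <= g y)%R.
Proof.
elim: s => [|z s IH] //=. rewrite in_cons => /orP [/eqP -> | H].
- apply Rmin_l.
- exact: Rle_trans (Rmin_r _ _) (IH H).
Qed.

Theorem theorem4p3 (X : finType) (P : X -> X -> Prop) (l r : X -> R) :
  is_interval_order P ->
  no_dup_holdings P ->
  interval_rep P l r ->
  distinguishing l r ->
  forall L : X -> X -> Prop, linear_extension P L ->
  exists f : X -> R, choice_function l r f /\ induced_order_eq f L.
Proof.
move=> _ _ [Hlr HP] [_ [_ Hd]] L [[Lirr Ltr] [Ltot LP]].
have inEn : forall z : X, z \in enum X by move=> z; rewrite mem_enum.
pose M x := fmax (fun y => if dec (L y x) then l y else l x) (l x) (enum X).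
have Mge : forall x, (l x <= M x)%R by move=> x; apply fmax_ge_a.
have Mlt : forall x, (M x < r x)%R.
  move=> x; apply fmax_lt.
  - have := Hlr x; have := Hd x x; lra.
  - move=> y _; case: (boolP (dec (L y x))) => [/decP Hyx | _].
    + have Hn : ~ (r x < l y)%R by move=> /HP /LP Hxy; apply: (Lirr x); exact: Ltr Hxy Hyx.
      have := Hd y x; lra.
    + have := Hlr x; have := Hd x x; lra.
have Mmono : forall x y, L x y -> (M x <= M y)%R.
  move=> x y Hxy; apply fmax_le.
  - have := @fmax_ge _ (fun z => if dec (L z y) then l z else l y) (l y) _ _ (inEn x).
    have -> : dec (L x y) = true by apply/decP.
    done.
  - move=> z _; case: (boolP (dec (L z x))) => [/decP Hzx | _].
    + have := @fmax_ge _ (fun z => if dec (L z y) then l z else l y) (l y) _ _ (inEn z).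
      have -> : dec (L z y) = true by apply/decP; exact: Ltr Hzx Hxy.
      done.
    + have := @fmax_ge _ (fun z => if dec (L z y) then l z else l y) (l y) _ _ (inEn x).
      have -> : dec (L x y) = true by apply/decP.
      rewrite -/(M y); have := Mge x; lra.
pose rk x := #|[pred y | dec (L y x)]|.
have rkmono : forall x y, L x y -> is_true (leq (rk x).+1 (rk y)).
  move=> x y Hxy; apply: proper_card; apply/properP; split.
  - apply/subsetP => z; rewrite !inE => /decP Hzx; apply/decP; exact: Ltr Hzx Hxy.
  - exists x; rewrite !inE; first by apply/decP.
    by apply/negP => /decP /Lirr.
have rkle : forall x, is_true (leq (rk x) #|X|) by move=> x; apply: max_card.
pose d := fmin (fun x => r x - M x)%R 1 (enum X).
have dpos : (0 < d)%R by apply fmin_pos => y _; have := Mlt y; lra.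
have dle : forall x, (d <= r x - M x)%R by move=> x; exact: (@fmin_le _ (fun x => r x - M x)%R _ x (inEn x)).
pose e := (d / (INR #|X| + 1))%R.
have Npos : (0 < INR #|X| + 1)%R by have := pos_INR #|X|; lra.
have epos : (0 < e)%R by apply Rdiv_lt_0_compat.
have ebound : (e * INR #|X| < d)%R.
  rewrite /e. apply (Rmult_lt_reg_r (INR #|X| + 1)) => //.
  field_simplify; [|lra]. nra.
pose f x := (M x + e * INR (rk x))%R.
have finc : forall x y, L x y -> (f x < f y)%R.
  move=> x y Hxy; rewrite /f. have := Mmono x y Hxy.
  have : (INR (rk x) < INR (rk y))%R by apply lt_INR; apply/ltP; apply rkmono.
  nra.
exists f; split; [split|].
- move=> x y Hf; case: (classic (x = y)) => // Hne.
  case: (Ltot x y Hne) => /finc; lra.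
- move=> x; rewrite /f; split.
  + have := Mge x; have := pos_INR (rk x); nra.
  + have : (INR (rk x) <= INR #|X|)%R by apply le_INR; apply/leP.
    have := dle x. nra.
- move=> x y; split; first exact: finc.
  move=> Hf; case: (classic (x = y)) => [Exy|Hne]; first by subst; lra.
  case: (Ltot x y Hne) => // /finc; lra.
Qed.
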